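(* Let $n\ge1$ and let $Q_1$ be a Kazhdan subset of $\mathbb R^{2n}=\mathbb R^n\times\mathbb R^n$, whose elements are written $(\mathbf q,\mathbf p)$. Then $\sup\{|\mathbf p|:(\mathbf q,\mathbf p)\in Q_1\}=+\infty$, where $|\mathbf p|$ is the Euclidean norm of $\mathbf p$.
   Context: A subset $Q$ is a Kazhdan set in $\mathbb R^{2n}$ (additive group, usual topology) if there exists $\varepsilon>0$ such that every strongly continuous unitary representation $\pi$ of $\mathbb R^{2n}$ on a complex Hilbert space having a vector $x$ with $\sup_{g\in Q}\|\pi(g)x-x\|<\varepsilon\|x\|$ has a non-zero invariant vector. *)

(* Defs.v *)
From Stdlib Require Fin.
From Stdlib Require Import Reals.
Open Scope R_scope.

Definition Vec (n : nat) : Type := Fin.t n -> R.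

Fixpoint sumFin (n : nat) : (Fin.t n -> R) -> R :=
  match n return (Fin.t n -> R) -> R with
  | O => fun _ => 0
  | S m => fun f => f Fin.F1 + sumFin m (fun i => f (Fin.FS i))
  end.

Definition vnorm {n : nat} (v : Vec n) : R := sqrt (sumFin n (fun i => v i * v i)).

(* The group R^{2n} = R^n x R^n, elements (q, p) *)
Definition G2n (n : nat) : Type := (Vec n * Vec n)%type.
Definition gadd {n : nat} (g h : G2n n) : G2n n :=
  (fun i => fst g i + fst h i, fun i => snd g i + snd h i).
Definition gzero (n : nat) : G2n n := (fun _ => 0, fun _ => 0).
Definition gsub {n : nat} (g h : G2n n) : G2n n :=
  (fun i => fst g i - fst h i, fun i => snd g i - snd h i).
Definition gnorm {n : nat} (g : G2n n) : R :=
  sqrt (sumFin n (fun i => fst g i * fst g i) + sumFin n (fun i => snd g i * snd g i)).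

Definition C : Type := (R * R)%type.
Definition C0 : C := (0, 0).
Definition C1 : C := (1, 0).
Definition Cadd (a b : C) : C := (fst a + fst b, snd a + snd b).
Definition Cmul (a b : C) : C :=
  (fst a * fst b - snd a * snd b, fst a * snd b + snd a * fst b).
Definition Cconj (a : C) : C := (fst a, - snd a).

Record HilbertSpace : Type := {
  hcar :> Type;
  hzero : hcar;
  hadd : hcar -> hcar -> hcar;
  hopp : hcar -> hcar;
  hscal : C -> hcar -> hcar;
  hinner : hcar -> hcar -> C;
  hadd_assoc : forall x y z, hadd x (hadd y z) = hadd (hadd x y) z;
  hadd_comm : forall x y, hadd x y = hadd y x;
  hadd_zero : forall x, hadd x hzero = x;
  hadd_opp : forall x, hadd x (hopp x) = hzero;
  hscal_one : forall x, hscal C1 x = x;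
  hscal_mul : forall a b x, hscal (Cmul a b) x = hscal a (hscal b x);
  hscal_addv : forall a x y, hscal a (hadd x y) = hadd (hscal a x) (hscal a y);
  hscal_adds : forall a b x, hscal (Cadd a b) x = hadd (hscal a x) (hscal b x);
  hinner_add : forall x y z, hinner (hadd x y) z = Cadd (hinner x z) (hinner y z);
  hinner_scal : forall a x y, hinner (hscal a x) y = Cmul a (hinner x y);
  hinner_conj : forall x y, hinner y x = Cconj (hinner x y);
  hinner_pos : forall x, 0 <= fst (hinner x x);
  hinner_def : forall x, hinner x x = C0 -> x = hzero;
  hcomplete : forall u : nat -> hcar,
    (forall eps, 0 < eps -> exists N, forall m k, (N <= m)%nat -> (N <= k)%nat ->
        sqrt (fst (hinner (hadd (u m) (hopp (u k))) (hadd (u m) (hopp (u k))))) < eps) ->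
    exists l, forall eps, 0 < eps -> exists N, forall m, (N <= m)%nat ->
        sqrt (fst (hinner (hadd (u m) (hopp l)) (hadd (u m) (hopp l)))) < eps
}.

Definition hnorm {H : HilbertSpace} (x : H) : R := sqrt (fst (hinner H x x)).
Definition hsub {H : HilbertSpace} (x y : H) : H := hadd H x (hopp H y).

Definition is_unitary_rep (n : nat) (H : HilbertSpace) (pi : G2n n -> H -> H) : Prop :=
  (forall g x y, pi g (hadd H x y) = hadd H (pi g x) (pi g y)) /\
  (forall g a x, pi g (hscal H a x) = hscal H a (pi g x)) /\
  (forall g x y, hinner H (pi g x) (pi g y) = hinner H x y) /\
  (* homomorphism property (hence each pi g is invertible, pi (-g) = pi g ^-1) *)
  (forall x, pi (gzero n) x = x) /\
  (forall g h x, pi (gadd g h) x = pi g (pi h x)) /\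
  (forall x g eps, 0 < eps -> exists delta, 0 < delta /\
      forall h, gnorm (gsub h g) < delta -> hnorm (hsub (pi h x) (pi g x)) < eps).

(* "sup_{g in Q} ||pi g x - x|| < eps ||x||" is expressed as: some bound c < eps ||x||
   dominates all ||pi g x - x||, g in Q. *)
Definition Kazhdan_set (n : nat) (Q : G2n n -> Prop) : Prop :=
  exists eps, 0 < eps /\
    forall (H : HilbertSpace) (pi : G2n n -> H -> H),
      is_unitary_rep n H pi ->
      forall x : H,
        (exists c, c < eps * hnorm x /\ forall g, Q g -> hnorm (hsub (pi g x) x) <= c) ->
        exists v : H, v <> hzero H /\ forall g, pi g v = v.

(* Main.v *)
Require Import Defs.
From Stdlib Require Import Reals Lra Lia Psatz Classical.
Open Scope R_scope.

Definition Copp (x : Defs.C) : Defs.C := (- fst x, - snd x).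
Definition N2 (z : Defs.C) : R := fst z * fst z + snd z * snd z.

Lemma sumFin_nonneg n : forall f : Fin.t n -> R, (forall i, 0 <= f i) -> 0 <= sumFin n f.
Proof.
  induction n; intros f Hf; simpl; [lra|].
  pose proof (Hf Fin.F1). pose proof (IHn (fun i => f (Fin.FS i)) (fun i => Hf _)). lra.
Qed.

Lemma sq_le1 a b : Rabs a <= sqrt (a*a+b*b).
Proof. rewrite <- sqrt_Rsqr_abs. apply sqrt_le_1_alt. unfold Rsqr. nra. Qed.

Lemma sq_le2 a b : sqrt (a*a+b*b) <= Rabs a + Rabs b.
Proof.
  pose proof (Rabs_pos a); pose proof (Rabs_pos b).
  rewrite <- (sqrt_Rsqr (Rabs a + Rabs b)) by lra. apply sqrt_le_1_alt.
  pose proof (Rsqr_abs a); pose proof (Rsqr_abs b). unfold Rsqr in *. nra.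
Qed.

Lemma key (x y : Defs.C) : fst (Cmul (Cadd x (Copp y)) (Cconj (Cadd x (Copp y))))
   = (fst x - fst y) * (fst x - fst y) + (snd x - snd y) * (snd x - snd y).
Proof. destruct x, y; unfold Cmul, Cadd, Copp, Cconj; simpl; ring. Qed.

Lemma C_complete : forall u : nat -> Defs.C,
    (forall eps, 0 < eps -> exists N, forall m k, (N <= m)%nat -> (N <= k)%nat ->
        sqrt (fst (Cmul (Cadd (u m) (Copp (u k))) (Cconj (Cadd (u m) (Copp (u k)))))) < eps) ->
    exists l, forall eps, 0 < eps -> exists N, forall m, (N <= m)%nat ->
        sqrt (fst (Cmul (Cadd (u m) (Copp l)) (Cconj (Cadd (u m) (Copp l))))) < eps.
Proof.
  intros u Hc.
  assert (C1' : Cauchy_crit (fun m => fst (u m))).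
  { intros e He; destruct (Hc e He) as [N HN]; exists N; intros m k Hm Hk; unfold R_dist.
    eapply Rle_lt_trans; [|apply (HN m k Hm Hk)]. rewrite key. apply sq_le1. }
  assert (C2' : Cauchy_crit (fun m => snd (u m))).
  { intros e He; destruct (Hc e He) as [N HN]; exists N; intros m k Hm Hk; unfold R_dist.
    eapply Rle_lt_trans; [|apply (HN m k Hm Hk)]. rewrite key, Rplus_comm. apply sq_le1. }
  destruct (R_complete _ C1') as [l1 H1]. destruct (R_complete _ C2') as [l2 H2].
  exists (l1, l2). intros e He.
  destruct (H1 (e/2)) as [N1 HN1]; [lra|]. destruct (H2 (e/2)) as [N2' HN2]; [lra|].
  exists (max N1 N2'). intros m Hm. rewrite key. simpl.
  eapply Rle_lt_trans; [apply sq_le2|].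
  assert (A1 := HN1 m ltac:(lia)). assert (A2 := HN2 m ltac:(lia)).
  unfold R_dist in *. lra.
Qed.

Definition CH : HilbertSpace.
Proof.
  refine {| hcar := Defs.C; hzero := C0; hadd := Cadd; hopp := Copp; hscal := Cmul;
            hinner := fun x y => Cmul x (Cconj y); hcomplete := C_complete |}.
  all: unfold Cmul, Cadd, Copp, Cconj, C0, C1.
  - intros [] [] []; simpl; f_equal; ring.
  - intros [] []; simpl; f_equal; ring.
  - intros []; simpl; f_equal; ring.
  - intros []; simpl; f_equal; ring.
  - intros []; simpl; f_equal; ring.
  - intros [] [] []; simpl; f_equal; ring.
  - intros [] [] []; simpl; f_equal; ring.
  - intros [] [] []; simpl; f_equal; ring.
  - intros [] [] []; simpl; f_equal; ring.
  - intros [] [] []; simpl; f_equal; ring.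
  - intros [] []; simpl; f_equal; ring.
  - intros []; simpl; nra.
  - intros [a b]; simpl; intro H. injection H as H1 H2. f_equal; nra.
Defined.

Lemma CH_inner x y : hinner CH x y = Cmul x (Cconj y). Proof. reflexivity. Qed.
Lemma CH_hsub x y : @hsub CH x y = Cadd x (Copp y). Proof. reflexivity. Qed.

Lemma norm_eq (z : Defs.C) : fst (Cmul z (Cconj z)) = N2 z.
Proof. destruct z; unfold Cmul, Cconj, N2; simpl; ring. Qed.

Lemma N2_nonneg z : 0 <= N2 z. Proof. unfold N2; nra. Qed.

Lemma N2_mul u x : N2 (Cmul u x) = N2 u * N2 x.
Proof. destruct u, x; unfold N2, Cmul; simpl; ring. Qed.

Definition rot (t : R) : Defs.C := (cos t, sin t).

Lemma sin_sq_le y : sin y * sin y <= y * y.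
Proof.
  assert (P : forall y, 0 < y -> sin y * sin y <= y * y).
  { intros z Hz. pose proof (sin_lt_x z Hz). pose proof (SIN_bound z).
    destruct (Rle_dec z PI).
    - pose proof (sin_ge_0 z ltac:(lra) r). nra.
    - pose proof PI2_1. pose proof PI2_Rlt_PI. nra. }
  destruct (Rtotal_order y 0) as [H|[H|H]].
  - specialize (P (- y) ltac:(lra)). rewrite sin_neg in P. nra.
  - subst; rewrite sin_0; lra.
  - auto.
Qed.

Lemma rot_dist s t : sqrt (N2 (Cadd (rot s) (Copp (rot t)))) <= Rabs (s - t).
Proof.
  rewrite <- sqrt_Rsqr_abs. apply sqrt_le_1_alt. unfold Rsqr.
  assert (E : N2 (Cadd (rot s) (Copp (rot t))) = 2 - 2 * cos (s - t)).
  { unfold N2, rot, Cadd, Copp; simpl. rewrite cos_minus.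
    pose proof (sin2_cos2 s); pose proof (sin2_cos2 t). unfold Rsqr in *. nra. }
  rewrite E. replace (s - t) with (2 * ((s - t)/2)) by field.
  rewrite cos_2a_sin. pose proof (sin_sq_le ((s-t)/2)). nra.
Qed.

Lemma rot_diff_norm s t x :
  @hnorm CH (@hsub CH (Cmul (rot s) x) (Cmul (rot t) x)) <= Rabs (s - t) * sqrt (N2 x).
Proof.
  unfold hnorm. rewrite CH_hsub, CH_inner, norm_eq.
  replace (Cadd (Cmul (rot s) x) (Copp (Cmul (rot t) x)))
    with (Cmul (Cadd (rot s) (Copp (rot t))) x)
    by (destruct x; unfold Cmul, Cadd, Copp, rot; simpl; f_equal; ring).
  rewrite N2_mul, sqrt_mult by apply N2_nonneg.
  apply Rmult_le_compat_r; [apply sqrt_pos| apply rot_dist].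
Qed.

Lemma rot_plus s t : rot (s + t) = Cmul (rot s) (rot t).
Proof. unfold rot, Cmul; simpl. rewrite cos_plus, sin_plus. f_equal; ring. Qed.

Definition p1 {n : nat} : Vec n -> R :=
  match n return Vec n -> R with O => fun _ => 0 | S m => fun v => v Fin.F1 end.

Lemma p1_le_vnorm n (v : Vec n) : Rabs (p1 v) <= vnorm v.
Proof.
  destruct n; simpl; unfold vnorm.
  - rewrite Rabs_R0; apply sqrt_pos.
  - simpl. rewrite <- sqrt_Rsqr_abs. apply sqrt_le_1_alt. unfold Rsqr.
    pose proof (sumFin_nonneg n (fun i => v (Fin.FS i) * v (Fin.FS i)) (fun i => ltac:(nra))).
    lra.
Qed.

Lemma p1_le_gnorm n (g : G2n n) : Rabs (p1 (snd g)) <= gnorm g.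
Proof.
  destruct n; simpl; unfold gnorm.
  - rewrite Rabs_R0; apply sqrt_pos.
  - simpl. rewrite <- sqrt_Rsqr_abs. apply sqrt_le_1_alt. unfold Rsqr.
    pose proof (sumFin_nonneg n (fun i => snd g (Fin.FS i) * snd g (Fin.FS i)) (fun i => ltac:(nra))).
    pose proof (sumFin_nonneg n (fun i => fst g (Fin.FS i) * fst g (Fin.FS i)) (fun i => ltac:(nra))).
    pose proof (Rle_0_sqr (fst g Fin.F1)). unfold Rsqr in *. lra.
Qed.

Lemma p1_sub n (g h : G2n n) : p1 (snd (gsub h g)) = p1 (snd h) - p1 (snd g).
Proof. destruct n; simpl; ring. Qed.
Lemma p1_add n (g h : G2n n) : p1 (snd (gadd g h)) = p1 (snd g) + p1 (snd h).
Proof. destruct n; simpl; ring. Qed.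
Lemma p1_zero n : p1 (snd (gzero n)) = 0.
Proof. destruct n; reflexivity. Qed.

Definition pi (a : R) {n : nat} (g : G2n n) (x : Defs.C) : Defs.C := Cmul (rot (a * p1 (snd g))) x.

Lemma rep_ok (a : R) (Ha : 0 < a) n : is_unitary_rep n CH (@pi a n).
Proof.
  unfold is_unitary_rep, pi; repeat split.
  - intros g [] []; cbn; unfold Cmul, Cadd; simpl; f_equal; ring.
  - intros g [] []; cbn; unfold Cmul; simpl; f_equal; ring.
  - intros g [] []. rewrite !CH_inner. unfold Cmul, Cconj, rot; simpl.
    pose proof (sin2_cos2 (a * p1 (snd g))) as Hcs. unfold Rsqr in *. set (c := cos _) in *. set (s := sin _) in *. f_equal; [transitivity ((s*s+c*c)*(r * r1 - r0 * - r2)) | transitivity ((s*s+c*c)*(r * - r2 + r0 * r1))]; (ring || (rewrite Hcs; ring)).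
  - intros []. rewrite p1_zero, Rmult_0_r. unfold rot, Cmul; simpl.
    rewrite cos_0, sin_0. f_equal; ring.
  - intros g h []. rewrite p1_add, Rmult_plus_distr_l, rot_plus.
    unfold Cmul; simpl; f_equal; ring.
  - intros x g eps Heps.
    set (r := sqrt (N2 x)). assert (Hr : 0 <= r) by apply sqrt_pos.
    exists (eps / (a * (r + 1))). split.
    + apply Rdiv_lt_0_compat; nra.
    + intros h Hh. eapply Rle_lt_trans; [apply rot_diff_norm|]. fold r.
      replace (a * p1 (snd h) - a * p1 (snd g)) with (a * p1 (snd (gsub h g)))
        by (rewrite p1_sub; ring).
      rewrite Rabs_mult, (Rabs_right a) by lra.
      pose proof (p1_le_gnorm n (gsub h g)).
      assert (Hlt : a * Rabs (p1 (snd (gsub h g))) * (r + 1) < eps).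
      { assert (a * Rabs (p1 (snd (gsub h g))) < a * (eps / (a * (r + 1)))) by
          (apply Rmult_lt_compat_l; lra).
        assert (E : a * (eps / (a * (r + 1))) * (r+1) = eps) by (field; lra).
        rewrite <- E at 1. apply Rmult_lt_compat_r; lra. }
      pose proof (Rabs_pos (p1 (snd (gsub h g)))). nra.
Qed.

Theorem lemmaG (n : nat) (Hn : (1 <= n)%nat) (Q1 : G2n n -> Prop) :
  Kazhdan_set n Q1 ->
  forall M : R, exists qp : G2n n, Q1 qp /\ M < vnorm (snd qp).
Proof.
  intros [eps [Heps HK]] M.
  apply NNPP; intro Hno.
  assert (Hb : forall qp, Q1 qp -> vnorm (snd qp) <= M).
  { intros qp Hq. apply Rnot_lt_le; intro; apply Hno; eauto. }
  set (a := eps / (2 * (Rabs M + 1))).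
  pose proof (Rabs_pos M).
  assert (Ha : 0 < a) by (unfold a; apply Rdiv_lt_0_compat; lra).
  assert (Ea : a * (Rabs M + 1) = eps / 2) by (unfold a; field; lra).
  destruct (HK CH (@pi a n) (rep_ok a Ha n) Defs.C1) as [v [Hv Hinv]].
  - exists (a * Rabs M). split.
    + unfold hnorm. rewrite CH_inner. unfold Cmul, Cconj, Defs.C1; simpl.
      replace (1 * 1 - 0 * - 0) with 1 by ring. rewrite sqrt_1. nra.
    + intros g Hg. unfold pi.
      assert (E : (Defs.C1 : hcar CH) = Cmul (rot 0) Defs.C1)
        by (unfold rot, Cmul, Defs.C1; simpl; rewrite cos_0, sin_0; f_equal; ring).
      rewrite E at 2. eapply Rle_trans; [apply rot_diff_norm|].
      assert (N2 Defs.C1 = 1) as ->  by (unfold N2, Defs.C1; simpl; ring). rewrite sqrt_1.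
      rewrite Rminus_0_r, Rmult_1_r, Rabs_mult, (Rabs_right a) by lra.
      apply Rmult_le_compat_l; [lra|].
      pose proof (p1_le_vnorm n (snd g)). pose proof (Hb g Hg).
      pose proof (Rle_abs M). lra.
  - destruct n as [|m]; [inversion Hn|].
    specialize (Hinv (fun _ => 0, fun _ => PI / a)).
    unfold pi in Hinv. simpl in Hinv.
    replace (a * (PI / a)) with PI in Hinv by (field; lra).
    unfold rot, Cmul in Hinv. rewrite cos_PI, sin_PI in Hinv.
    apply Hv. destruct v as [v1 v2]. simpl in Hinv.
    injection Hinv as H1 H2. simpl. unfold Defs.C0. f_equal; lra.
Qed.
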